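(* Let $0\le\theta<1/2$ and $m\ge1$ an integer, and let $X_1,\dots,X_m$ be i.i.d. $\mathrm{Rad}(\tfrac12+\theta)$ random variables. Then $X=\sum_{i=1}^mX_i$ satisfies $$\Pr(X>0)-\Pr(X<0)\ge\sqrt{\frac{2}{\pi e}}\cdot\min\{\sqrt{m}\,\theta,1\}.$$
   Context: $\mathrm{Rad}(p)$ denotes the distribution of a random variable taking value $1$ with probability $p$ and $-1$ with probability $1-p$. *)

(* Defs.v *)
From HB Require Import structures.
From mathcomp Require Import all_boot all_order all_algebra.
From mathcomp Require Import all_classical all_reals all_analysis.
Set Implicit Arguments. Unset Strict Implicit. Unset Printing Implicit Defensive.
Import Order.TTheory GRing.Theory Num.Theory.
Local Open Scope ring_scope.

(* Canonical model of m i.i.d. Rad(p) random variables X_1..X_m: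
   the sample space is {ffun 'I_m -> bool}; outcome w has X_i(w) = 1 if w i
   and X_i(w) = -1 otherwise; the probability of w is the product of the
   marginal Rad(p) probabilities (independence + identical distribution). *)

Definition rad_val (b : bool) : int := if b then 1 else -1.

Definition rad_sum (m : nat) (w : {ffun 'I_m -> bool}) : int :=
  \sum_(i < m) rad_val (w i).

Definition rad_pmf (R : realType) (p : R) (m : nat) (w : {ffun 'I_m -> bool}) : R :=
  \prod_(i < m) (if w i then p else 1 - p).

Definition Pr_sum_pos (R : realType) (p : R) (m : nat) : R :=
  \sum_(w : {ffun 'I_m -> bool} | (0 < rad_sum w)%R) rad_pmf p w.

Definition Pr_sum_neg (R : realType) (p : R) (m : nat) : R :=
  \sum_(w : {ffun 'I_m -> bool} | (rad_sum w < 0)%R) rad_pmf p w.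

(* Main.v *)
Require Import Defs.
From HB Require Import structures.
From mathcomp Require Import all_boot all_order all_algebra.
From mathcomp Require Import all_classical all_reals all_analysis.
From mathcomp Require Import zify ring lra.
Import Order.TTheory GRing.Theory Num.Theory.
Set Implicit Arguments. Unset Strict Implicit. Unset Printing Implicit Defensive.

Section NatPart.
Local Open Scope nat_scope.
Lemma Crec j : j.+1 * 'C(j.+1.*2, j.+1) = 2 * j.*2.+1 * 'C(j.*2, j).
Proof.
have h1 := mul_bin_diag j.*2.+2 j.
have h2 := mul_bin_diag j.*2.+1 j.
have h3 : 'C(j.*2.+1, j.+1) = 'C(j.*2.+1, j).
  by rewrite -bin_sub; [congr 'C(_, _); lia | lia].
rewrite /= in h1 h2; rewrite h3 in h2.
have e : j.+1.*2 = j.*2.+2 by rewrite doubleS.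
rewrite e.
apply/eqP; rewrite -(eqn_pmul2l (ltn0Sn j)); apply/eqP.
nia.
Qed.

Lemma poly1 j : j.+1 ^ 2 * (4 * j + 1) * 16 <= 4 * j.*2.+1 ^ 2 * (4 * j + 5).
Proof. rewrite -!mul2n !expnS !expn0 !muln1; nia. Qed.

Lemma Cbound j : 16 ^ j <= 'C(j.*2, j) ^ 2 * (4 * j + 1).
Proof.
elim: j => [|j IH]; first by rewrite bin0.
have key := Crec j.
set c := 'C(j.*2, j) in IH key *; set c' := 'C(j.+1.*2, j.+1) in key *.
rewrite -(@leq_pmul2l ((j.+1)^2 * (4 * j + 1))); last by nia.
have -> : j.+1 ^ 2 * (4 * j + 1) * (c' ^ 2 * (4 * j.+1 + 1)) =
   4 * (j.*2.+1)^2 * (4 * j + 5) * (c ^ 2 * (4 * j + 1)).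
  have -> : j.+1 ^ 2 * (4 * j + 1) * (c' ^ 2 * (4 * j.+1 + 1)) =
     (j.+1 * c') ^ 2 * (4 * j + 1) * (4 * j + 5) by nia.
  rewrite key; nia.
apply: (@leq_trans (4 * (j.*2.+1)^2 * (4 * j + 5) * 16 ^ j)); last first.
  by rewrite leq_mul2l IH orbT.
rewrite [16 ^ j.+1]expnS.
have h := poly1 j; have := leq_mul h (leqnn (16 ^ j)).
by rewrite mulnA.
Qed.

Lemma poly2 i j : (4 * i + 1) * (4 * j + 1) <= (2 * (i + j) + 1) ^ 2.
Proof.
rewrite !expnS expn0 muln1.
case: (leqP i j) => h.
  have [d ->] : exists d, j = i + d by exists (j - i); lia.
  nia.
have [d ->] : exists d, i = j + d by exists (i - j); lia.
nia.
Qed.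

Lemma Cpair i j : 4 ^ (i + j) <= 'C(i.*2, i) * 'C(j.*2, j) * (2 * (i + j) + 1).
Proof.
have hi := Cbound i; have hj := Cbound j.
rewrite -(@leq_exp2r _ _ 2) //.
have e1 : (4 ^ (i + j)) ^ 2 = 16 ^ i * 16 ^ j.
  by rewrite -expnM mulnC expnM expnD -!expnM.
rewrite e1.
apply: (@leq_trans (('C(i.*2, i) ^ 2 * (4 * i + 1)) * ('C(j.*2, j) ^ 2 * (4 * j + 1)))).
  exact: leq_mul.
have h := poly2 i j.
have := leq_mul (leqnn ('C(i.*2, i) ^ 2 * 'C(j.*2, j) ^ 2)) h.
nia.
Qed.

Lemma conv_nat n : 4 ^ n <= 2 * \sum_(i < n.+1) 'C(i.*2, i) * 'C((n - i).*2, n - i).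
Proof.
have H : n.+1 * 4 ^ n <= (\sum_(i < n.+1) 'C(i.*2, i) * 'C((n - i).*2, n - i)) * (2 * n + 1).
  rewrite big_distrl /=.
  have -> : n.+1 * 4 ^ n = \sum_(i < n.+1) 4 ^ n by rewrite sum_nat_const card_ord.
  apply: leq_sum => i _.
  have := Cpair i (n - i).
  have -> : i + (n - i) = n by have := ltn_ord i; lia.
  by [].
rewrite -(@leq_pmul2l (2 * n + 1)); last lia.
nia.
Qed.

End NatPart.

Local Open Scope ring_scope.
Section Comb.
Variables (R : realType) (p : R).

Definition PF m (F : int -> R) : R :=
  \sum_(w : {ffun 'I_m -> bool}) rad_pmf p w * F (rad_sum w).

Definition ext m (bw : bool * {ffun 'I_m -> bool}) : {ffun 'I_m.+1 -> bool} :=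
  [ffun i => if unlift ord_max i is Some j then bw.2 j else bw.1].
Definition res m (v : {ffun 'I_m.+1 -> bool}) : bool * {ffun 'I_m -> bool} :=
  (v ord_max, [ffun j => v (lift ord_max j)]).

Lemma ext_bij m : bijective (@ext m).
Proof.
exists (@res m).
- case=> b w; rewrite /res /ext /= !ffunE unlift_none; congr (_, _).
  by apply/ffunP => j; rewrite !ffunE liftK.
- move=> v; apply/ffunP => i; rewrite /res /ext ffunE /=.
  by case: unliftP => [j ->|->]; rewrite ?ffunE.
Qed.

Lemma ext_lift m bw (j : 'I_m) : @ext m bw (widen_ord (leqnSn m) j) = bw.2 j.
Proof.
have -> : widen_ord (leqnSn m) j = lift ord_max j.
  by apply/val_inj; rewrite /= /bump leqNgt ltn_ord.
by rewrite /ext ffunE liftK.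
Qed.

Lemma ext_max m bw : @ext m bw ord_max = bw.1.
Proof. by rewrite /ext ffunE unlift_none. Qed.

Lemma pmf_ext m b (w : {ffun 'I_m -> bool}) :
  rad_pmf p (ext (b, w)) = rad_pmf p w * (if b then p else 1 - p).
Proof.
rewrite /rad_pmf big_ord_recr /= ext_max.
by under eq_bigr => i _ do rewrite (ext_lift (b, w) i).
Qed.

Lemma sum_ext m b (w : {ffun 'I_m -> bool}) :
  rad_sum (ext (b, w)) = rad_sum w + rad_val b.
Proof.
rewrite /rad_sum big_ord_recr /= ext_max.
by under eq_bigr => i _ do rewrite (ext_lift (b, w) i).
Qed.

Lemma PF_rec m F : PF m.+1 F =
  p * PF m (fun s => F (s + 1)) + (1 - p) * PF m (fun s => F (s - 1)).
Proof.
rewrite /PF (reindex (@ext m)); last by apply: onW_bij; exact: ext_bij.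
rewrite -(pair_big xpredT xpredT (fun b w => rad_pmf p (ext (b, w)) * F (rad_sum (ext (b, w))))) /=.
rewrite big_bool /= !mulr_sumr; congr (_ + _); apply: eq_bigr => w _;
  by rewrite pmf_ext sum_ext /= -mulrA mulrCA.
Qed.

Lemma PF0 F : PF 0 F = F 0.
Proof.
rewrite /PF (big_pred1 [ffun i => false]); last first.
  by move=> w; apply/esym/eqP/ffunP => -[].
by rewrite /rad_pmf /rad_sum !big_ord0 mul1r.
Qed.

Lemma PF_binom m F : PF m F = \sum_(k < m.+1)
  'C(m, k)%:R * p ^+ k * (1 - p) ^+ (m - k) * F (k%:Z * 2 - m%:Z).
Proof.
elim: m F => [|m IH] F.
  by rewrite PF0 big_ord_recl big_ord0 /= bin0 expr0 !mul1r addr0.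
rewrite PF_rec !IH [RHS]big_ord_recl.
under [in RHS]eq_bigr => i _ do rewrite lift0 binS natrD !mulrDl.
rewrite [in RHS]big_split /= addrA addrC; congr (_ + _).
  rewrite mulr_sumr; apply: eq_bigr => k _.
  rewrite subSS exprS.
  have -> : (k.+1%:Z * 2 - m.+1%:Z) = k%:Z * 2 - m%:Z + 1 by lia.
  ring.
rewrite big_ord_recl mulrDr; congr (_ + _).
  rewrite !bin0 !subn0 exprS.
  have -> : (0%:Z * 2 - m.+1%:Z) = 0%:Z * 2 - m%:Z - 1 by lia.
  ring.
rewrite [RHS]big_ord_recr /= bin_small // mul0r !mul0r addr0 mulr_sumr.
apply: eq_bigr => i _ /=; rewrite /bump /= add1n subSS.
rewrite -(subnSK (ltn_ord i)) exprS.
have -> : (i.+1%:Z * 2 - m.+1%:Z) = i.+1%:Z * 2 - m%:Z - 1 by lia.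
rewrite [(1 - p) ^+ (m - i.+1).+1]exprS; ring.
Qed.

Definition sgR (s : int) : R := ((0 < s)%R)%:R - ((s < 0)%R)%:R.
Definition Ind (j s : int) : R := (s == j)%:R.

Lemma D_PF m : Pr_sum_pos p m - Pr_sum_neg p m = PF m sgR.
Proof.
rewrite /Pr_sum_pos /Pr_sum_neg /PF.
rewrite [X in X - _]big_mkcond [X in _ - X]big_mkcond /= -sumrB; apply: eq_bigr => w _.
rewrite /sgR mulrBr; case: (0 < _)%R; case: (_ < 0)%R; by rewrite ?mulr1 ?mulr0.
Qed.

Lemma PF_add m F G : PF m (fun s => F s + G s) = PF m F + PF m G.
Proof. by rewrite /PF -big_split; apply: eq_bigr => w _; rewrite mulrDr. Qed.

Lemma PF_opp m F : PF m (fun s => - F s) = - PF m F.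
Proof. by rewrite /PF -sumrN; apply: eq_bigr => w _; rewrite mulrN. Qed.

Lemma PF_ext m F G : F =1 G -> PF m F = PF m G.
Proof. by move=> H; rewrite /PF; apply: eq_bigr => w _; rewrite H. Qed.

Lemma sgRS s : sgR (s + 1) = sgR s + Ind 0 s + Ind (-1) s.
Proof.
rewrite /sgR /Ind.
case: s => [[|[|n]]|[|n]] //=; rewrite ?subrr ?addr0 ?add0r ?subr0 ?sub0r //.
all: by rewrite addNr.
Qed.

Lemma sgRP s : sgR (s - 1) = sgR s - Ind 0 s - Ind 1 s.
Proof.
rewrite /sgR /Ind.
case: s => [[|[|n]]|[|n]] //=; rewrite ?subrr ?addr0 ?add0r ?subr0 ?sub0r //.
all: by rewrite subrr.
Qed.

Lemma D_rec m : PF m.+1 sgR =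
  PF m sgR + (2 * p - 1) * PF m (Ind 0) + p * PF m (Ind (-1)) - (1 - p) * PF m (Ind 1).
Proof.
rewrite PF_rec /PF !mulr_sumr -sumrN -!big_split /=; apply: eq_bigr => w _.
rewrite sgRS sgRP; ring.
Qed.

Lemma sum_ind1 n (f : 'I_n -> R) (P : 'I_n -> bool) k0 :
  (forall k, P k = (k == k0)) -> \sum_k f k * (P k)%:R = f k0.
Proof.
move=> H; rewrite (bigD1 k0) //= H eqxx mulr1 big1 ?addr0 // => k /negbTE nk.
by rewrite H nk mulr0.
Qed.

Lemma sum_ind0 n (f : 'I_n -> R) (P : 'I_n -> bool) :
  (forall k, P k = false) -> \sum_k f k * (P k)%:R = 0.
Proof. by move=> H; rewrite big1 // => k _; rewrite H mulr0. Qed.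

Definition cf m (k : nat) : R := 'C(m, k)%:R * p ^+ k * (1 - p) ^+ (m - k).

Lemma Z_even0 K : PF K.*2 (Ind 0) = 'C(K.*2, K)%:R * (p * (1 - p)) ^+ K.
Proof.
rewrite PF_binom /Ind.
have HK : (K < K.*2.+1)%N by lia.
rewrite (@sum_ind1 _ (fun k : 'I_(K.*2.+1) => 'C(K.*2, k)%:R * p ^+ k * (1 - p) ^+ (K.*2 - k))
   (fun k : 'I_(K.*2.+1) => (k%:Z * 2 - (K.*2)%:Z == 0)) (Ordinal HK)).
  by rewrite /= exprMn mulrA; congr (_ * _); congr (_ ^+ _); lia.
move=> k; apply/eqP/eqP => [H|->]; last by rewrite /=; lia.
by apply/val_inj => /=; lia.
Qed.

Lemma Z_zero m j : (forall k, (k <= m)%N -> k%:Z * 2 - m%:Z != j) -> PF m (Ind j) = 0.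
Proof.
move=> H; rewrite PF_binom /Ind.
apply: (@sum_ind0 _ (fun k : 'I_(m.+1) => 'C(m, k)%:R * p ^+ k * (1 - p) ^+ (m - k))
   (fun k : 'I_(m.+1) => (k%:Z * 2 - m%:Z == j))).
by move=> k; apply/negbTE/H; rewrite -ltnS.
Qed.

Lemma Z_odd1 K : PF K.*2.+1 (Ind 1) = 'C(K.*2.+1, K.+1)%:R * p ^+ K.+1 * (1 - p) ^+ K.
Proof.
rewrite PF_binom /Ind.
have HK : (K.+1 < K.*2.+2)%N by lia.
rewrite (@sum_ind1 _ (fun k : 'I_(K.*2.+2) => 'C(K.*2.+1, k)%:R * p ^+ k * (1 - p) ^+ (K.*2.+1 - k))
   (fun k : 'I_(K.*2.+2) => (k%:Z * 2 - (K.*2.+1)%:Z == 1)) (Ordinal HK)).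
  by rewrite /=; congr (_ * _); congr (_ ^+ _); lia.
move=> k; apply/eqP/eqP => [H|->]; last by rewrite /=; lia.
by apply/val_inj => /=; lia.
Qed.

Lemma Z_oddm1 K : PF K.*2.+1 (Ind (-1)) = 'C(K.*2.+1, K)%:R * p ^+ K * (1 - p) ^+ K.+1.
Proof.
rewrite PF_binom /Ind.
have HK : (K < K.*2.+2)%N by lia.
rewrite (@sum_ind1 _ (fun k : 'I_(K.*2.+2) => 'C(K.*2.+1, k)%:R * p ^+ k * (1 - p) ^+ (K.*2.+1 - k))
   (fun k : 'I_(K.*2.+2) => (k%:Z * 2 - (K.*2.+1)%:Z == -1)) (Ordinal HK)).
  by rewrite /=; congr (_ * _); congr (_ ^+ _); lia.
move=> k; apply/eqP/eqP => [H|->]; last by rewrite /=; lia.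
by apply/val_inj => /=; lia.
Qed.

Lemma D_step_even K : PF K.*2.+1 sgR =
  PF K.*2 sgR + (2 * p - 1) * ('C(K.*2, K)%:R * (p * (1 - p)) ^+ K).
Proof.
rewrite D_rec Z_even0 !Z_zero ?mulr0 ?subr0 ?addr0 // => k _; apply/eqP; lia.
Qed.

Lemma D_step_odd K : PF K.*2.+2 sgR = PF K.*2.+1 sgR.
Proof.
rewrite D_rec Z_odd1 Z_oddm1 Z_zero ?mulr0 ?addr0; last by move=> k _; apply/eqP; lia.
have -> : 'C(K.*2.+1, K.+1) = 'C(K.*2.+1, K).
  by rewrite -bin_sub; [congr 'C(_, _); lia | lia].
rewrite !exprS; ring.
Qed.

Lemma D_formula K : PF K.*2 sgR =
  (2 * p - 1) * \sum_(j < K) 'C(j.*2, j)%:R * (p * (1 - p)) ^+ j.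
Proof.
elim: K => [|K IH]; first by rewrite big_ord0 mulr0 PF0 /sgR subrr.
by rewrite doubleS D_step_odd D_step_even IH big_ord_recr /= -mulrDr.
Qed.
End Comb.
Section An.
Variable R : realType.

Lemma exp_chord (t : R) : 0 <= t -> t <= 1 -> expR (-2 * t) <= 1 - t + t * expR (-2).
Proof.
move=> h0 h1; have := convex_expR (Itv01 h0 h1) (-2) 0.
rewrite !convRE /=.
have -> : unstable.onem t = 1 - t by [].
rewrite expR0 mulr0 addr0 mulr1 mulrC => H.
by apply: (le_trans H); rewrite addrC.
Qed.

Lemma E_ge : (625 / 256 : R) <= expR 1.
Proof.
have -> : expR (1:R) = expR (1 / 4) ^+ 4.
  by rewrite -expRM_natl; congr expR; field.
have h : 1 + 1 / 4 <= expR (1 / 4 : R) by exact: expR_ge1Dx.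
have -> : (625 / 256 : R) = (1 + 1 / 4) ^+ 4 by field.
by apply: lerXn2r => //; rewrite ?nnegrE; lra.
Qed.

End An.
Section Sq.
Variables (R : realFieldType) (y : R).
Hypothesis hy : 0 <= y.

Definition bb (j : nat) : R := 'C(j.*2, j)%:R * y ^+ j.
Definition SS (N : nat) : R := \sum_(j < N) bb j.
Definition TT (K : nat) : R := \sum_(i < K.+1) bb i * SS (K - i).+1.

Lemma bb_ge0 j : 0 <= bb j.
Proof. by rewrite /bb mulr_ge0 ?exprn_ge0. Qed.

Lemma SS_S N : SS N.+1 = SS N + bb N.
Proof. by rewrite /SS big_ord_recr. Qed.

Lemma SS_ge0 N : 0 <= SS N.
Proof. by rewrite /SS sumr_ge0 // => j _; apply: bb_ge0. Qed.

Lemma SS_mono n d : SS n <= SS (n + d).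
Proof.
elim: d => [|d IH]; first by rewrite addn0.
by rewrite addnS SS_S (le_trans IH) // lerDl bb_ge0.
Qed.

Lemma SS1 : SS 1 = 1.
Proof. by rewrite /SS big_ord_recr big_ord0 /= /bb bin0 expr0 mulr1 add0r. Qed.

Lemma TT_rec K : TT K.+1 = TT K + \sum_(i < K.+2) bb i * bb (K.+1 - i).
Proof.
rewrite /TT big_ord_recr /= subnn SS1 mulr1.
rewrite [X in _ = _ + X]big_ord_recr /= subnn.
have -> : bb 0 = 1 by rewrite /bb bin0 expr0 mulr1.
rewrite mulr1 addrA; congr (_ + _).
rewrite -big_split /=; apply: eq_bigr => i _.
have hi := ltn_ord i.
have -> : (K.+1 - widen_ord (leqnSn K.+1) i).+1 = (K - i).+1.+1 by rewrite /=; lia.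
have -> : (K.+1 - i)%N = (K - i).+1 by lia.
by rewrite SS_S mulrDr.
Qed.
Lemma conv_R n : (4 * y) ^+ n <= 2 * \sum_(i < n.+1) bb i * bb (n - i).
Proof.
have -> : \sum_(i < n.+1) bb i * bb (n - i) =
   (\sum_(i < n.+1) 'C(i.*2, i) * 'C((n - i).*2, n - i))%:R * y ^+ n.
  rewrite natr_sum mulr_suml; apply: eq_bigr => i _.
  have hi : (i <= n)%N by rewrite -ltnS.
  have -> : y ^+ n = y ^+ i * y ^+ (n - i) by rewrite -exprD subnKC.
  rewrite /bb natrM; ring.
rewrite mulrA exprMn; apply: ler_wpM2r; first exact: exprn_ge0.
have := conv_nat n; rewrite -(ler_nat R) natrM natrX => h.
exact: h.
Qed.

Lemma TT_lb K : \sum_(n < K.+1) (4 * y) ^+ n <= 2 * TT K.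
Proof.
elim: K => [|K IH].
  rewrite big_ord_recr big_ord0 /TT big_ord_recr big_ord0 /= SS1 /bb bin0 !expr0; lra.
rewrite big_ord_recr /= TT_rec mulrDr lerD //.
exact: conv_R.
Qed.

Lemma TT_le K : TT K <= SS K.+1 ^+ 2.
Proof.
rewrite expr2 /TT {1}/SS mulr_suml.
apply: ler_sum => i _; apply: ler_wpM2l; first exact: bb_ge0.
have hi := ltn_ord i.
have := SS_mono (K - i).+1 i.
by rewrite (_ : ((K - i).+1 + i)%N = K.+1) //; lia.
Qed.

Lemma SS_sq N : (0 < N)%N -> \sum_(n < N) (4 * y) ^+ n <= 2 * SS N ^+ 2.
Proof.
case: N => // K _.
apply: (le_trans (TT_lb K)); apply: ler_wpM2l => //; exact: TT_le.
Qed.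
End Sq.

Section Final.
Variable R : realType.

Lemma D_N (p : R) m : (0 < m)%N ->
  exists N, [/\ (0 < N)%N, (m <= N.*2)%N & PF p m (@sgR R) = (2 * p - 1) * SS (p * (1 - p)) N].
Proof.
move=> hm; rewrite -(odd_double_half m).
have hm' := hm; rewrite -(odd_double_half m) in hm'.
move: hm'; set K := m./2; case: (odd m) => /= hm'.
  exists K.+1; split => //.
  rewrite add1n D_step_even D_formula /SS big_ord_recr /= -mulrDr.
  by rewrite /bb.
exists K; split.
- by move: hm'; rewrite -!mul2n; lia.
- by rewrite add0n.
- by rewrite add0n D_formula.
Qed.

Lemma geom (x : R) N : (1 - x) * \sum_(n < N) x ^+ n = 1 - x ^+ N.
Proof.
elim: N => [|N IH]; first by rewrite big_ord0 mulr0 expr0 subrr.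
by rewrite big_ord_recr mulrDr IH exprS; ring.
Qed.

Lemma const_ineq : 4 / (pi * expR 1) <= 1 - expR (-2 : R).
Proof.
have hE := @E_ge R.
have hpi : (2 : R) <= pi := @pi_ge2 R.
set E := expR (1 : R) in hE *.
have E0 : 0 < E by lra.
have -> : expR (-2 : R) = (E ^-1) ^+ 2.
  by rewrite /E -expRN -expRM_natl mulrN1.
set a := E^-1.
have a0 : 0 < a by rewrite /a invr_gt0.
have a1 : a <= 256 / 625.
  rewrite /a -[256 / 625 : R]invf_div lef_pV2 ?posrE //; lra.
have -> : 4 / (pi * E) = 4 * a / pi by rewrite /a invfM; field; lra.
have h1 : 4 * a / pi <= 2 * a.
  rewrite ler_pdivrMr; last lra.
  nra.
nra.
Qed.

End Final.

Theorem lemma22 (R : realType) (theta : R) (m : nat) :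
  0 <= theta -> theta < 1 / 2 -> (1 <= m)%N ->
  Pr_sum_pos (1 / 2 + theta) m - Pr_sum_neg (1 / 2 + theta) m >=
    Num.sqrt (2 / (pi * expR 1)) * Num.min (Num.sqrt (m%:R) * theta) 1.
Proof.
move=> h0 h1 hm.
set p := 1 / 2 + theta.
have [N [hN hmN hD]] := D_N p hm.
rewrite D_PF hD.
have e2p : 2 * p - 1 = 2 * theta by rewrite /p; field.
have ey : 4 * (p * (1 - p)) = 1 - 4 * theta ^+ 2 by rewrite /p; field.
have hy : 0 <= p * (1 - p) by rewrite /p; nra.
set S := SS (p * (1 - p)) N.
have hS : 0 <= S by exact: SS_ge0.
have hsq := SS_sq hy hN; rewrite -/S ey in hsq.
set z := 4 * theta ^+ 2.
have z0 : 0 <= z by rewrite /z; nra.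
have z1 : z <= 1 by rewrite /z; nra.
have hg := geom (1 - z) N; rewrite opprB addrC subrK in hg.
have hexp : (1 - z) ^+ N <= expR (- (N%:R * z)).
  rewrite -(mulrN N%:R z) expRM_natl; apply: lerXn2r; rewrite ?nnegrE ?expR_ge0 //.
    lra.
  have := expR_ge1Dx (- z); lra.
rewrite e2p.
set D := 2 * theta * S.
have D0 : 0 <= D by rewrite /D; nra.
have hD2 : 1 - expR (- (N%:R * z)) <= 2 * D ^+ 2.
  have -> : D ^+ 2 = z * S ^+ 2 by rewrite /D /z; ring.
  have : z * \sum_(n < N) (1 - z) ^+ n <= z * (2 * S ^+ 2) by apply: ler_wpM2l.
  rewrite hg; lra.
set M := Num.min (Num.sqrt m%:R * theta) 1.
have M0 : 0 <= M.
  by rewrite /M le_min ler01 andbT mulr_ge0 // sqrtr_ge0.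
have hM1 : M <= 1 by rewrite /M ge_min lexx orbT.
have hMu : M ^+ 2 <= m%:R * theta ^+ 2.
  have : M <= Num.sqrt m%:R * theta by rewrite /M ge_min lexx.
  move=> h; have : M ^+ 2 <= (Num.sqrt m%:R * theta) ^+ 2.
    by rewrite ler_sqr ?nnegrE //; apply: mulr_ge0 => //; exact: sqrtr_ge0.
  by rewrite exprMn sqr_sqrtr ?ler0n.
set A := 2 / (pi * expR 1).
have A0 : 0 <= A by rewrite /A divr_ge0 ?mulr_ge0 ?expR_ge0 ?pi_ge0.
have hc := @const_ineq R.
have e4 : 4 / (pi * expR 1) = 2 * A by rewrite /A; ring.
rewrite e4 in hc.
have hmN' : m%:R <= 2 * N%:R :> R.
  by rewrite -[2 : R]/(2%:R) -natrM ler_nat mul2n.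
rewrite -(@ler_pXn2r _ 2) ?nnegrE //; last first.
  by apply: mulr_ge0 => //; exact: sqrtr_ge0.
rewrite exprMn sqr_sqrtr //.
set w := N%:R * z.
have w0 : 0 <= w by rewrite /w mulr_ge0.
set B := expR (-2 : R).
rewrite -/w in hD2; rewrite -/B in hc.
case: (leP 2 w) => hw.
- have : expR (- w) <= B by rewrite /B ler_expR; lra.
  move=> hB.
  have hX : A <= D ^+ 2 by lra.
  have : A * M ^+ 2 <= A * 1 by apply: ler_wpM2l => //; nra.
  lra.
- have ht := @exp_chord R (w / 2) ltac:(lra) ltac:(lra).
  rewrite (_ : -2 * (w / 2) = - w) in ht; last by field.
  have hu : m%:R * theta ^+ 2 <= w / 2.
    rewrite /w /z; nra.
  have hX : (w / 2) * (1 - B) <= 2 * D ^+ 2 by rewrite /B; lra.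
  have hY : (m%:R * theta ^+ 2) * (2 * A) <= (w / 2) * (1 - B).
    apply: ler_pM; rewrite ?mulr_ge0 ?ler0n ?sqr_ge0 //; lra.
  have : A * M ^+ 2 <= A * (m%:R * theta ^+ 2) by apply: ler_wpM2l.
  lra.
Qed.
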